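(* For any finite, connected, pointed, edge-ordered graph $G$ with distinguished vertex $v_0$, the graph $S(G)$ (defined below) is an arborescence.
   Context: A (directed) graph is $(V,\to)$ with $\to\subseteq V\times V$; $N(u)$ is the set of outgoing edges of $u$. A pointed graph has a distinguished vertex $v_0$; connected means every vertex is reachable by a path from $v_0$. A path is a finite sequence $v_1\to\cdots\to v_n$ of vertices joined by edges, with length $|\pi|$; co-initial paths share their source; $\pi\sqsubset\sigma$ means $\pi$ is a proper prefix of $\sigma$. A finite edge-ordered graph is a finite graph with a strict linear order $\triangleleft$ on each neighborhood. Lexicographic path order: if $\pi\sqsubset\sigma$ then $\pi\prec\sigma$ (symmetrically); otherwise, with $\zeta$ the longest common prefix, $u$ its target and $v_1,v_2$ the next vertices, $\pi\prec\sigma$ iff $u\to v_1\triangleleft u\to v_2$. $\min^s(u\rightsquigarrow v)$ is the lexicographically least shortest path from $u$ to $v$. An arborescence is a pointed graph such that for every vertex $u$ there is a unique path $v_0\rightsquigarrow u$. $S(G)$ is the graph with the vertices and distinguished vertex of $G$, containing an edge $u\to v$ iff $u\to v$ is an edge of the path $\min^s(v_0\rightsquigarrow v)$ in $G$, with co-initial edges ordered as in $G$. *)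

(* Defs.v *)
From mathcomp Require Import all_boot.
Set Implicit Arguments. Unset Strict Implicit. Unset Printing Implicit Defensive.

Section Graphs.
Variable V : finType.

(* A path from x is represented by its source x and the sequence p of the
   remaining vertices: x :: p; its target is last x p, its length size p. *)

(* Edge order: for each u, ord u is a strict linear order on the
   out-neighbourhood N(u) (edges out of u are identified with their targets). *)
Definition edge_ordered (e : rel V) (ord : V -> rel V) : Prop :=
  [/\ (forall u v, e u v -> ~~ ord u v v),
      (forall u a b c, e u a -> e u b -> e u c ->
          ord u a b -> ord u b c -> ord u a c) &
      (forall u v w, e u v -> e u w -> v != w -> ord u v w || ord u w v)].

Fixpoint lexlt (ord : V -> rel V) (x : V) (p q : seq V) : bool :=
  match p, q with
  | [::], _ :: _ => true
  | _, [::] => false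
  | a :: p', b :: q' => if a == b then lexlt ord a p' q' else ord x a b
  end.

Definition is_min_s (e : rel V) (ord : V -> rel V) (u v : V) (p : seq V) : Prop :=
  [/\ path e u p, last u p = v &
      forall q, path e u q -> last u q = v ->
        size p <= size q /\ (size q = size p -> q <> p -> lexlt ord u p q)].

Definition path_edges (x : V) (p : seq V) : seq (V * V) := zip (x :: p) p.

Definition S_edge (e : rel V) (ord : V -> rel V) (v0 : V) (u v : V) : Prop :=
  exists p, is_min_s e ord v0 v p /\ (u, v) \in path_edges v0 p.

Fixpoint ppath (E : V -> V -> Prop) (x : V) (p : seq V) : Prop :=
  match p with
  | [::] => True
  | y :: p' => E x y /\ ppath E y p'
  end.

Definition arborescence (E : V -> V -> Prop) (v0 : V) : Prop :=
  forall u, exists! p : seq V, ppath E v0 p /\ last v0 p = u.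

End Graphs.

(* Main.v *)
Require Import Defs.
From mathcomp Require Import all_boot zify.

Set Implicit Arguments. Unset Strict Implicit.

Section Aux.
Variable V : finType.
Variable e : rel V.
Variable ord : V -> rel V.
Hypothesis Hord : edge_ordered e ord.

Lemma lexlt_irr x p : lexlt ord x p p = false.
Proof. by elim: p x => [|a p IH] x //=; rewrite eqxx IH. Qed.

Lemma lexlt_trans x p q r : path e x p -> path e x q -> path e x r ->
  lexlt ord x p q -> lexlt ord x q r -> lexlt ord x p r.
Proof.
case: Hord => irr tr _.
elim: p x q r => [|a p IH] x [|b q] [|c r] //= /andP[ea pa] /andP[eb pb] /andP[ec pc].
case: (eqVneq a b) => [ab|nab]; case: (eqVneq a c) => [ac|nac]; try subst b; try subst c => /=.
- by rewrite eqxx; exact: IH.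
- by rewrite (negbTE nac).
- rewrite eq_sym (negbTE nab) => h1 h2.
  by have := irr _ _ ea; rewrite (tr _ _ _ _ ea eb ea h1 h2).
- case: (eqVneq b c) => [bc|nbc] h1 h2.
  + by subst c.
  + exact: (tr _ _ _ _ ea eb ec h1 h2).
Qed.

Lemma lexlt_tot x p q : path e x p -> path e x q -> size p = size q -> p != q ->
  lexlt ord x p q || lexlt ord x q p.
Proof.
case: Hord => _ _ tot.
elim: p x q => [|a p IH] x [|b q] //= /andP[ea pa] /andP[eb pb] [sz] neq.
case: (eqVneq a b) => [ab|nab].
- subst b; apply: IH => //. by apply: contra neq => /eqP ->.
- rewrite ?eq_sym ?(negbTE nab) /=; exact: tot.
Qed.

Lemma lexlt_asym x p q : path e x p -> path e x q ->
  lexlt ord x p q -> lexlt ord x q p -> False.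
Proof.
move=> pp pq h1 h2; have := lexlt_trans pp pq pp h1 h2.
by rewrite lexlt_irr.
Qed.

Lemma lexlt_rcons x p q b : size p = size q ->
  lexlt ord x (rcons p b) (rcons q b) -> lexlt ord x p q.
Proof.
elim: p x q => [|a p IH] x [|c q] //=.
- by rewrite eqxx.
- move=> [sz]; case: (a == c) => //; exact: IH.
Qed.

Lemma fin_min (T : finType) (P : pred T) (lt : rel T) :
  (forall x, P x -> ~~ lt x x) ->
  (forall x y z, P x -> P y -> P z -> lt x y -> lt y z -> lt x z) ->
  forall x0, P x0 -> exists2 x, P x & forall y, P y -> ~~ lt y x.
Proof.
move=> irr tr.
suff H : forall n x, #|[pred y | P y && lt y x]| <= n -> P x ->
  exists2 x, P x & forall y, P y -> ~~ lt y x.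
  by move=> x0; apply: (H _ x0 (leqnn _)).
elim=> [|n IH] x.
- move=> c Px; exists x => // y Py; apply/negP => l.
  move: c; rewrite leqn0 => /eqP/card0_eq h.
  by have := h y; rewrite !inE /= Py l.
- move=> c Px; case: (pickP [pred y | P y && lt y x]) => [y /andP[Py lyx]|none].
  + apply: (IH y) => //.
    have : #|[pred z | P z && lt z y]| < #|[pred y | P y && lt y x]|.
      apply: proper_card; apply/properP; split.
        apply/subsetP => z; rewrite !inE => /andP[Pz lzy].
        by rewrite Pz (tr _ _ _ Pz Py Px lzy lyx).
      by exists y; rewrite !inE ?Py ?lyx // (negbTE (irr _ Py)) andbF.
    by move=> h; rewrite -ltnS; exact: leq_trans h c.
  + exists x => // y Py; have := none y; rewrite /= Py /= => ->; done.
Qed.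

Lemma min_s_exists v0 v : connect e v0 v -> exists p, is_min_s e ord v0 v p.
Proof.
case: Hord => irr _ _.
move=> /connectP [p0 pp0 lp0].
pose P n := [exists t : n.-tuple V, path e v0 t && (last v0 t == v)].
have P0 : exists n, P n.
  exists (size p0); apply/existsP; exists (in_tuple p0) => /=.
  by rewrite pp0 lp0 eqxx.
case: (ex_minnP P0) => m /existsP [t0 Ht0] mmin.
pose Q : pred (m.-tuple V) := fun t => path e v0 t && (last v0 t == v).
have [t /andP[pt /eqP lt] tmin] := @fin_min _ Q (fun a b => lexlt ord v0 a b)
  (fun x _ => negbT (lexlt_irr v0 x)) 
  (fun x y z Px Py Pz => lexlt_trans (proj1 (andP Px)) (proj1 (andP Py)) (proj1 (andP Pz))) t0 Ht0.
exists (val t); split => // q pq lq.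
have Pq : P (size q).
  apply/existsP; exists (in_tuple q) => /=; by rewrite pq lq eqxx.
split; first by rewrite size_tuple; apply: mmin.
move=> sz neq.
have sq : size q == m by rewrite sz size_tuple.
have := @lexlt_tot v0 q t pq pt; rewrite sz => /(_ erefl).
have neq' : q != t by apply/eqP => h; apply: neq.
move=> /(_ neq') /orP [l|//].
have := tmin (Tuple sq); rewrite /Q /= pq lq eqxx /= => /(_ isT).
by rewrite l.
Qed.

Lemma min_s_uniq v0 v p q : is_min_s e ord v0 v p -> is_min_s e ord v0 v q -> p = q.
Proof.
move=> [pp lp hp] [pq lq hq].
have [s1 h1] := hp q pq lq; have [s2 h2] := hq p pp lp.
have sz : size q = size p by apply/eqP; rewrite eqn_leq s1 s2.
case: (eqVneq p q) => // neq.
exfalso; apply: (lexlt_asym pp pq).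
- by apply: h1 => // h; rewrite h eqxx in neq.
- by apply: h2 => // h; rewrite h eqxx in neq.
Qed.

Lemma zip_split (x u v : V) (p : seq V) : (u, v) \in zip (x :: p) p ->
  exists p1 p2, p = p1 ++ v :: p2 /\ last x p1 = u.
Proof.
elim: p x => [|a p IH] x //=.
rewrite inE => /orP [/eqP [-> ->]|h].
- by exists [::], p.
- have [p1 [p2 [-> l]]] := IH a h. by exists (a :: p1), p2.
Qed.

Lemma min_s_edge v0 v p u : is_min_s e ord v0 v p -> (u, v) \in path_edges v0 p ->
  exists p1, p = rcons p1 v /\ last v0 p1 = u.
Proof.
move=> [pp lp hp] /zip_split [p1 [p2 [ep lu]]].
have pr : path e v0 (rcons p1 v).
  by move: pp; rewrite ep -cat_rcons cat_path => /andP[].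
have [s _] := hp _ pr (last_rcons _ _ _).
move: s; rewrite ep size_rcons size_cat /=.
case: p2 ep => [|b p2] ep; last by move=> /=; lia.
by move=> _; exists p1; rewrite cats1.
Qed.

Lemma min_s_prefix v0 v p b : is_min_s e ord v0 v (rcons p b) ->
  is_min_s e ord v0 (last v0 p) p.
Proof.
move=> [pp lp hp]; move: (pp); rewrite rcons_path => /andP[pp1 eb].
split => // q pq lq.
have pr : path e v0 (rcons q b) by rewrite rcons_path pq lq eb.
have [s h] := hp _ pr (etrans (last_rcons _ _ _) (etrans (esym (last_rcons v0 p b)) lp)).
split; first by move: s; rewrite !size_rcons.
move=> sz neq; apply: (@lexlt_rcons _ _ _ b) => //.
apply: h; first by rewrite !size_rcons sz.
by move=> /rcons_inj [].
Qed.

Lemma ppath_rcons (E : V -> V -> Prop) x p y :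
  ppath E x (rcons p y) <-> ppath E x p /\ E (last x p) y.
Proof.
elim: p x => [|a p IH] x /=; first by split; [move=> [h _]|move=> [_ h]].
rewrite IH; tauto.
Qed.

Lemma last_edge (x b : V) (p : seq V) : (last x p, b) \in path_edges x (rcons p b).
Proof.
elim: p x => [|a p IH] x /=; first by rewrite mem_seq1.
by rewrite inE IH orbT.
Qed.

End Aux.

Theorem lemma10p5 (V : finType) (e : rel V) (ord : V -> rel V) (v0 : V) :
  edge_ordered e ord ->
  (forall v, connect e v0 v) ->
  arborescence (S_edge e ord v0) v0.
Proof.
move=> Hord conn.
have noin : forall u, ~ S_edge e ord v0 u v0.
  move=> u [p [mp ed]].
  have [p1 [ep _]] := min_s_edge mp ed.
  case: mp => _ _ /(_ [::] isT erefl) [s _].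
  by move: s; rewrite ep size_rcons.
have inuniq : forall u u' v, S_edge e ord v0 u v -> S_edge e ord v0 u' v -> u = u'.
  move=> u u' v [p [mp ed]] [p' [mp' ed']].
  have [p1 [ep lu]] := min_s_edge mp ed.
  have [p1' [ep' lu']] := min_s_edge mp' ed'.
  have := min_s_uniq Hord mp mp'; rewrite ep ep' => /rcons_inj; case=> eq1.
  by rewrite -lu -lu' eq1.
have minpath : forall p v, is_min_s e ord v0 v p -> ppath (S_edge e ord v0) v0 p.
  elim/last_ind => [|p b IH] v mp //.
  apply/ppath_rcons; split.
  - exact: IH (min_s_prefix mp).
  - case: (mp) => _ lp _; rewrite last_rcons in lp; subst v.
    exists (rcons p b); split => //; exact: last_edge.
have uniq : forall p q u, ppath (S_edge e ord v0) v0 p -> last v0 p = u ->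
    ppath (S_edge e ord v0) v0 q -> last v0 q = u -> p = q.
  elim/last_ind => [|p b IH] q u pp lp; case/lastP: q => [|q c] //=.
  - move=> /ppath_rcons [_ h]; rewrite last_rcons => ec; subst.
    by case: (noin _ h).
  - move: pp => /ppath_rcons [_ h] _ /= ev; rewrite last_rcons -ev in lp.
    by rewrite lp in h; case: (noin _ h).
  - move: pp => /ppath_rcons [pp h] /ppath_rcons [pq h'].
    rewrite !last_rcons in lp * => ec; subst.
    have el := inuniq _ _ _ h h'.
    by rewrite (IH q (last v0 p) pp erefl pq (esym el)).
move=> u; have [p mp] := min_s_exists Hord (conn u).
exists p; split.
  split; [exact: minpath _ _ mp | by case: mp => _ ? _].
move=> q [pq lq]; apply: (uniq p q u) => //; [exact: minpath _ _ mp | by case: mp => _ ? _].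
Qed.
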